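(* Let $0<\delta<1$, $0<\varepsilon<1/7$, $2<\alpha<\min(\frac{2}{1-\delta},3)$ and $0<\rho<\min\!\left(\frac{1-\delta}{2},\frac{2-\alpha(1-\delta)}{4}\right)$. Then for all sufficiently large $n$ the following holds. Let $G\sim G(n,p)$ with $p=n^{\delta-1}$, and let $H$ be a balanced graph on $m=n^{\rho}$ vertices with average degree $\alpha$. Then $\mathbb E[X_H(G)]\to+\infty$ as $n\to\infty$, and for every $\beta\in[0,1)$, \[\Pr\big[X_H(G)\le\beta\,\mathbb E[X_H(G)]\big]\le\frac{4\varepsilon}{(1-\beta)^2}.\]
   Context: A graph with average degree $\alpha$ is balanced if every induced subgraph has average degree at most $\alpha$. $G(n,p)$ is the Erdős–Rényi random graph on $[n]$. With $H$ on vertex set $[m]$ ($m$ assumed to divide $n$), partition $[n]$ into parts $P_i=\{(i-1)\frac nm+1,\dots,i\frac nm\}$. $X_H(G)$ is the number of sets $S=\{v_1,\dots,v_m\}$ with $v_i\in P_i$ such that $i\mapsto v_i$ is an isomorphism from $H$ onto the induced subgraph $G[S]$. *)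

(* Defs.v *)
From HB Require Import structures.
From mathcomp Require Import all_boot all_order all_algebra.
From mathcomp Require Import reals exp.
Set Implicit Arguments. Unset Strict Implicit. Unset Printing Implicit Defensive.
Import Order.TTheory GRing.Theory Num.Theory.
Local Open Scope ring_scope.

Definition simple_graph (T : finType) (e : rel T) : Prop :=
  (forall x, e x x = false) /\ (forall x y, e x y = e y x).

Definition n_edges_in (T : finType) (e : rel T) (S : {set T}) : nat :=
  #|[set x : T * T | [&& x.1 \in S, x.2 \in S, (enum_rank x.1 < enum_rank x.2)%N
                        & e x.1 x.2]]|.

Definition avg_deg_in {R : realType} (T : finType) (e : rel T) (S : {set T}) : R :=
  (2 * n_edges_in e S)%:R / #|S|%:R.

Definition has_avg_deg {R : realType} (T : finType) (e : rel T) (alpha : R) : Prop :=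
  avg_deg_in (R:=R) e [set: T] = alpha.

Definition balanced {R : realType} (T : finType) (e : rel T) (alpha : R) : Prop :=
  has_avg_deg e alpha /\
  forall S : {set T}, S != set0 -> avg_deg_in e S <= alpha.

(* A graph on 'I_n is encoded by its edge set: a set of pairs (u,v) with u < v. *)
Definition gedges (n : nat) := {set 'I_n * 'I_n}.

Definition is_simple_edges n (E : gedges n) : bool :=
  [forall x in E, (x.1 < x.2)%N].

Definition gadj n (E : gedges n) (u v : 'I_n) : bool :=
  ((u, v) \in E) || ((v, u) \in E).

Definition gnp_prob {R : realType} (n : nat) (p : R) (E : gedges n) : R :=
  if is_simple_edges E then p ^+ #|E| * (1 - p) ^+ ('C(n, 2) - #|E|) else 0.

Definition gnp_E {R : realType} n (p : R) (X : gedges n -> R) : R :=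
  \sum_(E : gedges n) gnp_prob p E * X E.

Definition gnp_Pr {R : realType} n (p : R) (A : pred (gedges n)) : R :=
  \sum_(E : gedges n | A E) gnp_prob p E.

(* part i = P_{i+1} = { i*(n/m), ..., (i+1)*(n/m) - 1 }  (0-indexed vertices) *)
Definition part (n m : nat) (i : 'I_m) : {set 'I_n} :=
  [set v : 'I_n | (i * (n %/ m) <= v)%N && (v < i.+1 * (n %/ m))%N].

Definition X_H (n m : nat) (e : rel 'I_m) (E : gedges n) : nat :=
  #|[set S : {set 'I_n} |
     [exists f : {ffun 'I_m -> 'I_n},
        [&& [forall i, f i \in @part n m i],
            S == f @: [set: 'I_m],
            injectiveb f
          & [forall i, forall j, e i j == gadj E (f i) (f j)]]]]|.

(* Main.v *)
Require Import Defs.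
From HB Require Import structures.
From mathcomp Require Import all_boot all_order all_algebra.
From mathcomp Require Import reals exp.
From mathcomp Require Import ring lra sequences.
Import Order.TTheory GRing.Theory Num.Theory.
Local Open Scope ring_scope.
Set Implicit Arguments. Unset Strict Implicit.

Lemma card_lt_pairs n : #|[set x : 'I_n * 'I_n | (x.1 < x.2)%N]| = 'C(n, 2).
Proof.
rewrite -sum1_card big_mkcond /=.
rewrite (eq_bigr (fun x : 'I_n * 'I_n => ((x.1 < x.2)%N : nat))); last first.
  by move=> x _; rewrite inE; case: ifP.
rewrite -(pair_big xpredT xpredT (fun u v : 'I_n => ((u < v)%N : nat))) /=.
rewrite exchange_big /=.
rewrite -bin2_sum big_mkord.
apply: eq_bigr => v _.
have Hv := ltn_ord v.
have inj : injective (@widen_ord v n (ltnW Hv)) by move=> a b H; apply: val_inj; exact: (congr1 val H).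
rewrite -[RHS](card_ord v) -cardsT -(card_imset _ inj) -sum1_card.
rewrite big_mkcond /= [RHS]big_mkcond /=; apply: eq_bigr => u _.
case: ifP => [/imsetP [w _ ->]|nin]; first by rewrite /= ltn_ord.
case: (boolP (u < v)%N) => [uv|//]; case/negP: nin; apply/imsetP.
by exists (Ordinal uv) => //; apply: val_inj.
Qed.


Section Prob.
Variables (R : realType) (n : nat) (p : R).

Definition wt (x : 'I_n * 'I_n) (b : bool) : R :=
  if (x.1 < x.2)%N then (if b then p else 1 - p) else (if b then 0 else 1).

Lemma gnp_prob_prod (E : gedges n) : gnp_prob p E = \prod_x wt x (x \in E).
Proof.
rewrite /gnp_prob /is_simple_edges.
case: forallP => [simp|nsimp].
  set Ub := [set x : 'I_n * 'I_n | (x.1 < x.2)%N].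
  have sub : E \subset Ub by apply/subsetP => x xE; rewrite inE; exact: (implyP (simp x) xE).
  rewrite (bigID (fun x => x \in Ub)) /=.
  rewrite [X in _ = _ * X]big1 ?mulr1; last first.
    move=> x; rewrite inE => /negbTE nx; rewrite /wt nx.
    case: ifP => // xE; move: nx; by rewrite (implyP (simp x) xE).
  rewrite (bigID (fun x => x \in E)) /=.
  rewrite (eq_bigr (fun=> p)); last by move=> x /andP[]; rewrite /wt inE => -> ->.
  rewrite [X in _ = _ * X](eq_bigr (fun=> 1 - p)); last first.
    by move=> x /andP[]; rewrite /wt inE => -> /negbTE ->.
  rewrite !prodr_const.
  congr (_ ^+ _ * _ ^+ _).
    apply: eq_card => x; change ((x \in E) = (x \in Ub) && (x \in E)).
    by case xE: (x \in E); rewrite ?andbF // (subsetP sub x xE).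
  rewrite -card_lt_pairs -/Ub.
  have -> : #|[pred x | (x \in Ub) && (x \notin E)]| = #|Ub :\: E|.
    by apply: eq_card => x; rewrite [in RHS]inE andbC.
  by rewrite cardsD (setIidPr sub).
move/forallP: nsimp; case/existsP => x; rewrite negb_imply => /andP[xE nx].
by rewrite (bigD1 x) //= /wt xE (negbTE nx) mul0r.
Qed.

Lemma sum_constraint (ok : 'I_n * 'I_n -> bool -> bool) :
  \sum_(E : gedges n) gnp_prob p E * \prod_x (ok x (x \in E))%:R
  = \prod_x \sum_(b : bool) wt x b * (ok x b)%:R.
Proof.
rewrite bigA_distr_bigA /=.
rewrite (reindex (fun f : {ffun 'I_n * 'I_n -> bool} => [set x | f x])); last first.
  exists (fun A : gedges n => [ffun x => x \in A]) => [f _|A _].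
    by apply/ffunP => x; rewrite ffunE inE.
  by apply/setP => x; rewrite inE ffunE.
apply: eq_bigr => f _.
rewrite gnp_prob_prod -big_split /=.
by apply: eq_bigr => x _; rewrite inE.
Qed.

End Prob.


Section Parts.
Variables (n m : nat).
Local Notation q := (n %/ m)%N.

Lemma part_bounds (i : 'I_m) (v : 'I_n) :
  (v \in @part n m i) = (i * q <= v)%N && (v < i.+1 * q)%N.
Proof. by rewrite inE. Qed.

Lemma part_uniq (i j : 'I_m) (v : 'I_n) :
  v \in @part n m i -> v \in @part n m j -> i = j.
Proof.
rewrite !part_bounds => /andP[a1 a2] /andP[b1 b2].
apply: val_inj => /=; apply/eqP; rewrite eqn_leq; apply/andP; split.
  rewrite leqNgt; apply/negP => ji.
  have : (j.+1 * q <= i * q)%N by rewrite leq_mul2r ji orbT.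
  by move=> h; have := leq_trans b2 (leq_trans h a1); rewrite ltnn.
rewrite leqNgt; apply/negP => ij.
have : (i.+1 * q <= j * q)%N by rewrite leq_mul2r ij orbT.
move=> h. have := leq_trans a2 (leq_trans h b1). by rewrite ltnn.
Qed.

Lemma part_lt (i j : 'I_m) (u v : 'I_n) :
  u \in @part n m i -> v \in @part n m j -> (i < j)%N -> (u < v)%N.
Proof.
rewrite !part_bounds => /andP[a1 a2] /andP[b1 b2] ij.
apply: (leq_trans a2); apply: leq_trans b1; by rewrite leq_mul2r ij orbT.
Qed.

Lemma card_part (i : 'I_m) : #|@part n m i| = q.
Proof.
have le : (i * q + q <= n)%N.
  rewrite addnC -mulSn; apply: leq_trans (leq_trunc_div n m).
  by rewrite mulnC leq_mul2l ltn_ord orbT.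
have H (k : 'I_q) : (i * q + k < n)%N.
  by apply: leq_trans le; rewrite ltn_add2l ltn_ord.
pose h (k : 'I_q) : 'I_n := Ordinal (H k).
have inj : injective h by move=> a b /(congr1 val) /= /addnI /val_inj.
rewrite -[RHS](card_ord q) -cardsT -(card_imset _ inj).
apply: eq_card => v; rewrite part_bounds.
apply/andP/imsetP => [[v1 v2]|[k _ ->]]; last first.
  by rewrite /= leq_addr mulSn addnC ltn_add2r ltn_ord.
have hk : (v - i * q < q)%N.
  by rewrite ltn_subLR // addnC -mulSn.
exists (Ordinal hk) => //; apply: val_inj => /=; by rewrite subnKC.
Qed.

End Parts.


Section Graph.
Variables (n m : nat) (e : rel 'I_m).
Hypothesis se : simple_graph e.

Definition inF (f : {ffun 'I_m -> 'I_n}) := [forall i, f i \in @part n m i].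
Definition okf (f : {ffun 'I_m -> 'I_n}) (x : 'I_n * 'I_n) (b : bool) :=
  [forall i : 'I_m, forall j : 'I_m, ((i < j)%N && (x == (f i, f j))) ==> (b == e i j)].
Definition isof (f : {ffun 'I_m -> 'I_n}) (E : gedges n) :=
  [forall i, forall j, e i j == gadj E (f i) (f j)].

Lemma inF_part f i : inF f -> f i \in @part n m i.
Proof. by move/forallP. Qed.

Lemma inF_inj f : inF f -> injective f.
Proof.
move=> Ff i j fij; apply: (@part_uniq n m _ _ (f i)); first exact: inF_part.
by rewrite fij; apply: inF_part.
Qed.

Lemma inF_lt f (i j : 'I_m) : inF f -> (i < j)%N -> (f i < f j)%N.
Proof. by move=> Ff; apply: part_lt; apply: inF_part. Qed.

Lemma simpleE (E : gedges n) x : is_simple_edges E -> x \in E -> (x.1 < x.2)%N.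
Proof. by move/forallP/(_ x)/implyP. Qed.

Lemma iso_ok f E : is_simple_edges E -> inF f ->
  isof f E = [forall x, okf f x (x \in E)].
Proof.
move=> sE Ff; case: se => irr sym.
have nE (u v : 'I_n) : (v < u)%N -> (u, v) \in E = false.
  move=> vu; apply/negP => /(simpleE sE) /= uv.
  by have := ltn_trans uv vu; rewrite ltnn.
apply/idP/idP.
  move/forallP => H; apply/forallP => x; apply/forallP => i; apply/forallP => j.
  apply/implyP => /andP[ij /eqP ->].
  move/forallP: (H i) => /(_ j) /eqP ->.
  by rewrite /gadj (nE _ _ (inF_lt Ff ij)) orbF.
move/forallP => H; apply/forallP => i; apply/forallP => j.
rewrite /gadj.
case: (ltngtP i j) => [ij|ji|/val_inj ->].
- have := forallP (forallP (H (f i, f j)) i) j.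
  by rewrite ij eqxx /= => /eqP ->; rewrite (nE _ _ (inF_lt Ff ij)) orbF.
- have := forallP (forallP (H (f j, f i)) j) i.
  by rewrite ji eqxx /= => /eqP ->; rewrite (nE _ _ (inF_lt Ff ji)) sym.
- rewrite irr; apply/eqP; apply/esym/negbTE/negP => /orP[] /(simpleE sE) /=; by rewrite ltnn.
Qed.

Lemma X_H_sum E : X_H e E = #|[set f | inF f && isof f E]|.
Proof.
rewrite /X_H.
have -> : [set S : {set 'I_n} | [exists f : {ffun 'I_m -> 'I_n},
        [&& [forall i, f i \in @part n m i], S == f @: [set: 'I_m], injectiveb f
          & [forall i, forall j, e i j == gadj E (f i) (f j)]]]]
   = (fun f : {ffun 'I_m -> 'I_n} => f @: [set: 'I_m]) @: [set f | inF f && isof f E].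
  apply/setP => S; rewrite inE; apply/existsP/imsetP.
    case=> f /and4P[Ff /eqP -> _ If]; exists f => //; by rewrite inE /inF Ff.
  case=> f; rewrite inE => /andP[Ff If] ->; exists f.
  apply/and4P; split=> //; apply/injectiveP; exact: inF_inj.
apply: card_in_imset => f g; rewrite !inE => /andP[Ff _] /andP[Fg _] eqfg.
apply/ffunP => i.
have : f i \in g @: [set: 'I_m] by rewrite -eqfg imset_f.
case/imsetP => k _ fik.
have ik : i = k by apply: (@part_uniq n m _ _ (f i)); [apply: inF_part | rewrite fik; apply: inF_part].
by rewrite fik ik.
Qed.

End Graph.


Lemma prod_bool (R : realType) (T : finType) (b : T -> bool) :
  \prod_x ((b x)%:R : R) = ([forall x, b x])%:R.
Proof.
case: forallP => [H|/forallP]; first by rewrite big1 // => x _; rewrite H.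
rewrite negb_forall => /existsP [x /negbTE bx].
by rewrite (bigD1 x) //= bx mul0r.
Qed.

Section Phi.
Variables (R : realType) (n m : nat) (e : rel 'I_m) (p : R).
Hypothesis se : simple_graph e.
Hypothesis p0 : 0 < p.
Hypothesis p1 : p < 1.
Implicit Types (f g : {ffun 'I_m -> 'I_n}) (x : 'I_n * 'I_n).

Definition Pairs := [set ij : 'I_m * 'I_m | (ij.1 < ij.2)%N].
Definition EPairs := [set ij : 'I_m * 'I_m | (ij.1 < ij.2)%N && e ij.1 ij.2].
Definition hf (f : {ffun 'I_m -> 'I_n}) (ij : 'I_m * 'I_m) := (f ij.1, f ij.2).
Definition Cf (f : {ffun 'I_m -> 'I_n}) := hf f @: Pairs.
Definition Af (f : {ffun 'I_m -> 'I_n}) := hf f @: EPairs.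
Definition phi (f : {ffun 'I_m -> 'I_n}) x := \sum_(b : bool) wt p x b * (okf e f x b)%:R.
Definition P0 := \prod_(ij in Pairs) (if e ij.1 ij.2 then p else 1 - p).

Lemma hf_inj f : inF f -> injective (hf f).
Proof.
move=> Ff [i j] [k l] /= [] /(inF_inj Ff) -> /(inF_inj Ff) -> //.
Qed.

Lemma okf_in f (i j : 'I_m) b : inF f -> (i < j)%N -> okf e f (f i, f j) b = (b == e i j).
Proof.
move=> Ff ij; apply/forallP/idP => [/(_ i)/forallP/(_ j)|/eqP -> k].
  by rewrite ij eqxx.
apply/forallP => l; apply/implyP => /andP[_ /eqP [] /(inF_inj Ff) <- /(inF_inj Ff) <-].
by [].
Qed.

Lemma notCf f x : x \notin Cf f -> forall i j : 'I_m, (i < j)%N -> x != (f i, f j).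
Proof.
move=> nx i j ij; apply/eqP => xe; case/negP: nx; apply/imsetP.
by exists (i, j); rewrite ?inE.
Qed.

Lemma okf_out f x b : x \notin Cf f -> okf e f x b.
Proof.
move=> nx; apply/forallP => i; apply/forallP => j; apply/implyP => /andP[ij xe].
by move: (notCf nx ij); rewrite xe.
Qed.

Lemma wt_sum x : wt p x true + wt p x false = 1.
Proof. by rewrite /wt; case: ifP => _; rewrite ?add0r // addrC subrK. Qed.

Lemma wt_ge0 x b : 0 <= wt p x b.
Proof.
rewrite /wt; case: ifP => _; case: b => //; rewrite ?subr_ge0 ltW //.
Qed.

Lemma phi_out f x : x \notin Cf f -> phi f x = 1.
Proof.
move=> nx; rewrite /phi big_bool /= !okf_out // !mulr1; exact: wt_sum.
Qed.

Lemma phi_in f (i j : 'I_m) : inF f -> (i < j)%N ->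
  phi f (f i, f j) = if e i j then p else 1 - p.
Proof.
move=> Ff ij; rewrite /phi big_bool /= !okf_in // /wt /= (inF_lt Ff ij).
by case: (e i j); rewrite /= ?mulr1 ?mulr0 ?addr0 ?add0r.
Qed.

Lemma prod_phi f : inF f -> \prod_x phi f x = P0.
Proof.
move=> Ff; rewrite (bigID (fun x => x \in Cf f)) /=.
rewrite [X in _ * X]big1 ?mulr1; last by move=> x; apply: phi_out.
rewrite big_imset /=; last by move=> a b _ _; apply: hf_inj.
apply: eq_bigr => [[i j]]; rewrite inE /= => ij.
exact: phi_in.
Qed.


Lemma E_iso f : inF f -> \sum_(E : gedges n) gnp_prob p E * (isof e f E)%:R = P0.
Proof.
move=> Ff; rewrite -(prod_phi Ff) /phi -sum_constraint.
apply: eq_bigr => E _.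
rewrite prod_bool.
case sE: (is_simple_edges E); first by rewrite (iso_ok se sE Ff).
by rewrite /gnp_prob sE !mul0r.
Qed.

Definition phi2 f g x :=
  \sum_(b : bool) wt p x b * (okf e f x b)%:R * (okf e g x b)%:R.

Lemma E_iso2 f g : inF f -> inF g ->
  \sum_(E : gedges n) gnp_prob p E * ((isof e f E)%:R * (isof e g E)%:R)
  = \prod_x phi2 f g x.
Proof.
move=> Ff Fg.
rewrite /phi2 (eq_bigr (fun x => \sum_(b : bool) wt p x b * (okf e f x b && okf e g x b)%:R)); last first.
  by move=> x _; apply: eq_bigr => b _; rewrite -mulnb natrM mulrA.
rewrite -sum_constraint; apply: eq_bigr => E _.
case sE: (is_simple_edges E); last by rewrite /gnp_prob sE !mul0r.
rewrite (iso_ok se sE Ff) (iso_ok se sE Fg) -!prod_bool -big_split /=.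
by congr (_ * _); apply: eq_bigr => x _; rewrite -natrM mulnb.
Qed.

Lemma Af_sub f x : x \in Af f -> x \in Cf f.
Proof.
case/imsetP => ij; rewrite inE => /andP[ij12 _] ->; apply/imsetP; exists ij => //.
by rewrite inE.
Qed.

Lemma Af_in f (i j : 'I_m) : inF f -> (i < j)%N -> ((f i, f j) \in Af f) = e i j.
Proof.
move=> Ff ij; apply/imsetP/idP => [[[k l]]|eij].
  by rewrite inE /= => /andP[_ ekl] [] /(inF_inj Ff) -> /(inF_inj Ff) ->.
by exists (i, j); rewrite // inE /= ij eij.
Qed.

Lemma phi_ge0 f x : 0 <= phi f x.
Proof. by apply: sumr_ge0 => b _; apply: mulr_ge0; [apply: wt_ge0|apply: ler0n]. Qed.

Definition rr f g x :=
  (if (x \in Af f) && (x \in Af g) then p^-1 else 1) *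
  (if x \in Cf f then (1 - p)^-1 else 1).

Lemma phi2_le f g x : inF f -> inF g -> phi2 f g x <= phi f x * phi g x * rr f g x.
Proof.
move=> Ff Fg.
have q0 : 0 < 1 - p by rewrite subr_gt0.
have ge1 : 1 <= (1 - p)^-1 by rewrite invf_ge1 // lerBlDr lerDl ltW.
rewrite /rr.
case: (boolP (x \in Cf f)) => xf; last first.
  have -> : x \in Af f = false by apply/negP => /Af_sub; apply/negP.
  rewrite (phi_out xf) /phi2 /phi /= !mul1r mulr1.
  by rewrite le_eqVlt; apply/orP; left; apply/eqP; apply: eq_bigr => b _; rewrite okf_out // mulr1.
case: (boolP (x \in Cf g)) => xg; last first.
  have -> : x \in Af g = false by apply/negP => /Af_sub; apply/negP.
  rewrite (phi_out xg) andbF mul1r mulr1.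
  have -> : phi2 f g x = phi f x.
    by rewrite /phi2 /phi; apply: eq_bigr => b _; rewrite (okf_out _ xg) mulr1.
  by rewrite ler_peMr ?phi_ge0.
case/imsetP: xf => [[i j]]; rewrite inE /= => ij xe.
case/imsetP: xg => [[k l]]; rewrite inE /= => kl xe'.
rewrite xe /hf /= in xe' *.
have o : (f i < f j)%N by apply: inF_lt.
rewrite (Af_in Ff ij) xe' (Af_in Fg kl) -xe'.
rewrite /phi2 /phi !big_bool /= !okf_in // xe' !okf_in // -xe' /wt /= o.
have pi : p^-1 * p = 1 by rewrite mulVf // gt_eqF.
have qi : (1 - p)^-1 * (1 - p) = 1 by rewrite mulVf // gt_eqF.
case: (e i j); case: (e k l); rewrite /= ?mulr1 ?mulr0 ?addr0 ?add0r ?mul0r ?mul1r.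
- have -> : p * p * (p^-1 / (1 - p)) = p / (1 - p) by field; rewrite ?gt_eqF.
  rewrite ler_pdivlMr //; nra.
- by apply: divr_ge0; [apply: mulr_ge0|]; rewrite ltW.
- by apply: divr_ge0; [apply: mulr_ge0|]; rewrite ltW.
- have -> : (1 - p) * (1 - p) / (1 - p) = 1 - p by field; rewrite ?gt_eqF.
  by [].
Qed.


Lemma prod_rr f g : \prod_x rr f g x =
  (p^-1) ^+ #|[pred x | (x \in Af f) && (x \in Af g)]| * ((1 - p)^-1) ^+ #|Cf f|.
Proof.
rewrite /rr big_split /= -!big_mkcond /= !prodr_const.
by congr (_ * _).
Qed.

Definition Kset f g := [set i | f i == g i].

Lemma card_ST f g : inF f -> inF g ->
  (#|[pred x | (x \in Af f) && (x \in Af g)]| <= n_edges_in e (Kset f g))%N.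
Proof.
move=> Ff Fg.
set EK := [set ij : 'I_m * 'I_m | [&& ij.1 \in Kset f g, ij.2 \in Kset f g,
                                    (ij.1 < ij.2)%N & e ij.1 ij.2]].
have -> : n_edges_in e (Kset f g) = #|EK|.
  by apply: eq_card => ij; rewrite !inE !enum_rank_ord.
apply: leq_trans (leq_imset_card (hf f) EK).
apply: subset_leq_card; apply/subsetP => x; rewrite unfold_in /= => /andP[xf xg].
case/imsetP: xf => [[i j]]; rewrite inE /= => /andP[ij eij] xe.
case/imsetP: xg => [[k l]]; rewrite inE /= => /andP[kl _] xe'.
rewrite xe /hf /= in xe'; case: xe' => e1 e2.
have ik : i = k by apply: (@part_uniq n m _ _ (f i)); [apply: inF_part | rewrite e1; apply: inF_part].
have jl : j = l by apply: (@part_uniq n m _ _ (f j)); [apply: inF_part | rewrite e2; apply: inF_part].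
subst k l.
apply/imsetP; exists (i, j) => //.
by rewrite !inE /= e1 e2 !eqxx ij eij.
Qed.

Lemma phi2_ge0 f g x : 0 <= phi2 f g x.
Proof.
by apply: sumr_ge0 => b _; apply: mulr_ge0; [apply: mulr_ge0; [apply: wt_ge0|]|]; apply: ler0n.
Qed.

Lemma joint_le f g : inF f -> inF g ->
  \prod_x phi2 f g x <=
  P0 * P0 * ((p^-1) ^+ n_edges_in e (Kset f g) * ((1 - p)^-1) ^+ (m * m)).
Proof.
move=> Ff Fg.
have pi1 : 1 <= p^-1 by rewrite invf_ge1 // ltW.
have qi1 : 1 <= (1 - p)^-1 by rewrite invf_ge1 ?subr_gt0 // lerBlDr lerDl ltW.
apply: le_trans (_ : \prod_x (phi f x * phi g x * rr f g x) <= _).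
  by apply: ler_prod => x _; rewrite phi2_ge0 phi2_le.
rewrite big_split /= big_split /= (prod_phi Ff) (prod_phi Fg) prod_rr.
have P00 : 0 <= P0.
  by apply: prodr_ge0 => ij _; case: ifP => _; rewrite ?subr_ge0 ltW.
apply: ler_wpM2l; first by apply: mulr_ge0.
apply: ler_pM; rewrite ?exprn_ge0 ?(le_trans _ pi1) ?(le_trans _ qi1) //.
  by apply: ler_weXn2l => //; apply: card_ST.
apply: ler_weXn2l => //.
apply: leq_trans (leq_imset_card _ _) _.
by apply: leq_trans (max_card _) _; rewrite card_prod card_ord.
Qed.

End Phi.


Lemma sum_in (R : realType) (T : finType) (A : {set T}) :
  \sum_v ((v \in A)%:R : R) = #|A|%:R.
Proof.
rewrite (eq_bigr (fun v => if v \in A then 1 else 0)); last by move=> v _; case: (v \in A).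
by rewrite -big_mkcond sumr_const.
Qed.

Section Sum.
Variables (R : realType) (n m : nat) (e : rel 'I_m) (p alpha : R).
Hypothesis se : simple_graph e.
Hypothesis bal : balanced e alpha.
Hypothesis p0 : 0 < p.
Hypothesis p1 : p < 1.
Implicit Types (f g : {ffun 'I_m -> 'I_n}).

Definition ttv := (p^-1) `^ (alpha / 2).

Lemma tt_ge0 : 0 <= ttv. Proof. exact: powR_ge0. Qed.

Lemma pow_K f g : (p^-1) ^+ n_edges_in e (Kset f g) <= ttv ^+ #|Kset f g|.
Proof.
have pi1 : 1 <= p^-1 by rewrite invf_ge1 // ltW.
have pi0 : 0 <= p^-1 by apply: le_trans pi1.
case: (eqVneq (Kset f g) set0) => [->|Kn0].
  have -> : n_edges_in e set0 = 0%N by apply: eq_card0 => x; rewrite !inE.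
  by rewrite cards0 !expr0.
case: bal => _ /(_ _ Kn0).
rewrite /avg_deg_in => H.
have K0 : (0 < #|Kset f g|%:R :> R) by rewrite ltr0n card_gt0.
rewrite -[X in X <= _]powR_mulrn // -[X in _ <= X]powR_mulrn ?tt_ge0 // /ttv -powRrM.
apply: ler_powR => //.
rewrite ler_pdivrMr // in H.
rewrite natrM in H. lra.
Qed.


Lemma factor_sum (P : {set 'I_n}) (t : R) :
  \sum_u \sum_v ((u \in P)%:R * (v \in P)%:R * (if u == v then t else 1))
  = (#|P| * #|P|)%:R + #|P|%:R * (t - 1).
Proof.
have E u : \sum_v ((u \in P)%:R * (v \in P)%:R * (if u == v then t else 1))
   = (u \in P)%:R * #|P|%:R + (u \in P)%:R * (t - 1).
  rewrite (eq_bigr (fun v => (u \in P)%:R * (v \in P)%:R +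
                     (u \in P)%:R * (v \in P)%:R * ((u == v)%:R * (t - 1)))); last first.
    move=> v _; case: eqP => [->|_]; rewrite ?mul1r ?mul0r ?addr0 //; ring.
  rewrite big_split /= -big_distrr /= sum_in; congr (_ + _).
  rewrite (bigD1 u) //= big1 ?addr0; last first.
    by move=> v /negbTE; rewrite eq_sym => ->; rewrite mul0r mulr0.
  by case: (u \in P); rewrite /= ?mul1r ?mul0r ?eqxx ?mul1r.
rewrite (eq_bigr _ (fun u _ => E u)) big_split /= -!big_distrl /= sum_in.
by rewrite natrM.
Qed.

Lemma sum_pairs (t : R) :
  \sum_(f : {ffun 'I_m -> 'I_n}) \sum_(g : {ffun 'I_m -> 'I_n}) ((inF f)%:R * (inF g)%:R * t ^+ #|Kset f g|)
  = (((n %/ m) * (n %/ m))%:R + (n %/ m)%:R * (t - 1)) ^+ m.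
Proof.
pose F (i : 'I_m) (u v : 'I_n) : R :=
  (u \in @part n m i)%:R * (v \in @part n m i)%:R * (if u == v then t else 1).
have E1 f g : (inF f)%:R * (inF g)%:R * t ^+ #|Kset f g| = \prod_i F i (f i) (g i).
  rewrite /F !big_split /= /inF -!prod_bool; congr (_ * _).
  rewrite -big_mkcond prodr_const /=; congr (_ ^+ _).
  by apply: eq_card => i; rewrite inE.
rewrite (eq_bigr (fun f => \prod_i \sum_v F i (f i) v)); last first.
  move=> f _; rewrite bigA_distr_bigA /=.
  by apply: eq_bigr => g _; rewrite E1.
rewrite -(bigA_distr_bigA (fun i u => \sum_v F i u v)) /=.
rewrite (eq_bigr (fun _ => ((n %/ m * (n %/ m))%:R + (n %/ m)%:R * (t - 1)))).
  by rewrite prodr_const card_ord.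
by move=> i _; rewrite /F factor_sum card_part.
Qed.

End Sum.


Section Main.
Variables (R : realType) (n m : nat) (e : rel 'I_m) (p : R).
Hypothesis se : simple_graph e.
Hypothesis p0 : 0 < p.
Hypothesis p1 : p < 1.

Definition Xr (E : gedges n) : R := (X_H e E)%:R.

Lemma Xr_sum E : Xr E = \sum_(f : {ffun 'I_m -> 'I_n}) (inF f)%:R * (isof e f E)%:R.
Proof.
rewrite /Xr X_H_sum -sum_in; apply: eq_bigr => f _.
by rewrite inE -natrM mulnb.
Qed.

Lemma gnp_ge0 (E : gedges n) : 0 <= gnp_prob p E.
Proof.
rewrite /gnp_prob; case: ifP => _ //.
by apply: mulr_ge0; apply: exprn_ge0; rewrite ?subr_ge0 ltW.
Qed.

Lemma gnp_sum1 : \sum_(E : gedges n) gnp_prob p E = 1.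
Proof.
have H := sum_constraint p (fun (_ : 'I_n * 'I_n) (_ : bool) => true).
rewrite (eq_bigr (fun E => gnp_prob p E)) in H; last by move=> E _; rewrite big1 ?mulr1.
rewrite H; apply: big1 => x _.
by rewrite big_bool /= !mulr1 wt_sum.
Qed.

Lemma card_F : \sum_(f : {ffun 'I_m -> 'I_n}) ((inF f)%:R : R) = (n %/ m)%:R ^+ m.
Proof.
rewrite (eq_bigr (fun f : {ffun 'I_m -> 'I_n} => \prod_i ((f i \in @part n m i)%:R : R))); last first.
  by move=> f _; rewrite prod_bool.
rewrite -(bigA_distr_bigA (fun i u => ((u \in @part n m i)%:R : R))) /=.
rewrite (eq_bigr (fun _ => (n %/ m)%:R)); first by rewrite prodr_const card_ord.
by move=> i _; rewrite sum_in card_part.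
Qed.

Lemma EX : gnp_E p Xr = (n %/ m)%:R ^+ m * P0 e p.
Proof.
rewrite /gnp_E (eq_bigr (fun E => \sum_(f : {ffun 'I_m -> 'I_n})
     gnp_prob p E * ((inF f)%:R * (isof e f E)%:R))); last first.
  by move=> E _; rewrite Xr_sum big_distrr.
rewrite exchange_big /= -card_F big_distrl /=.
apply: eq_bigr => f _.
case Ff: (inF f); last by rewrite big1 ?mul0r // => E _; rewrite mul0r mulr0.
rewrite mul1r -(E_iso p se Ff); apply: eq_bigr => E _; by rewrite mul1r.
Qed.


Lemma cheb (X : gedges n -> R) (beta : R) : 0 <= beta -> beta < 1 ->
  0 <= gnp_E p X ->
  gnp_Pr p (fun E => X E <= beta * gnp_E p X) * ((1 - beta) ^+ 2 * gnp_E p X ^+ 2)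
   <= gnp_E p (fun E => X E ^+ 2) - gnp_E p X ^+ 2.
Proof.
move=> b0 b1 mu0; set mu := gnp_E p X.
rewrite /gnp_Pr big_distrl /=.
apply: le_trans (_ : \sum_(E : gedges n | X E <= beta * mu) gnp_prob p E * (mu - X E) ^+ 2 <= _).
  apply: ler_sum => E XE; apply: ler_wpM2l; first exact: gnp_ge0.
  have h1 : (1 - beta) * mu <= mu - X E by rewrite mulrBl mul1r lerD2l lerN2.
  have h2 : 0 <= (1 - beta) * mu by apply: mulr_ge0; rewrite // subr_ge0 ltW.
  rewrite -exprMn; nra.
apply: le_trans (_ : \sum_(E : gedges n) gnp_prob p E * (mu - X E) ^+ 2 <= _).
  rewrite [X in _ <= X](bigID (fun E => X E <= beta * mu)) /= lerDl.
  by apply: sumr_ge0 => E _; apply: mulr_ge0; [apply: gnp_ge0|apply: sqr_ge0].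
rewrite (eq_bigr (fun E => gnp_prob p E * X E ^+ 2 - (2 * mu) * (gnp_prob p E * X E)
                        + mu ^+ 2 * gnp_prob p E)); last by move=> E _; ring.
rewrite !big_split /= sumrN -!big_distrr /= gnp_sum1 -/(gnp_E p _) -/mu.
have -> : \sum_(i : gedges n) gnp_prob p i * X i = mu by [].
rewrite le_eqVlt; apply/orP; left; apply/eqP; ring.
Qed.

Variable alpha : R.
Hypothesis bal : balanced e alpha.

Lemma P0_ge0 : 0 <= P0 e p.
Proof. by apply: prodr_ge0 => ij _; case: ifP => _; rewrite ?subr_ge0 ltW. Qed.

Lemma EX2 : gnp_E p (fun E => Xr E ^+ 2) <=
  P0 e p * P0 e p * ((1 - p)^-1) ^+ (m * m) *
  ((((n %/ m) * (n %/ m))%:R + (n %/ m)%:R * (ttv p alpha - 1)) ^+ m).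
Proof.
rewrite /gnp_E -(sum_pairs n m (ttv p alpha)).
have step1 (E : gedges n) : gnp_prob p E * Xr E ^+ 2 =
  \sum_(f : {ffun 'I_m -> 'I_n}) \sum_(g : {ffun 'I_m -> 'I_n})
     gnp_prob p E * (((inF f)%:R * (isof e f E)%:R) * ((inF g)%:R * (isof e g E)%:R)).
  rewrite expr2 Xr_sum big_distrl /= big_distrr /=; apply: eq_bigr => f _.
  by rewrite big_distrr /= big_distrr /=; apply: eq_bigr => g _.
rewrite (eq_bigr _ (fun E _ => step1 E)) exchange_big /= big_distrr /=.
apply: ler_sum => f _; rewrite exchange_big /= big_distrr /=.
apply: ler_sum => g _.
have c0 : 0 <= ((1 - p)^-1) ^+ (m * m) by rewrite exprn_ge0 // invr_ge0 subr_ge0 ltW.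
case Ff: (inF f); last first.
  rewrite big1; last by move=> E _; rewrite /= !mul0r mulr0.
  by rewrite /= !mul0r mulr0.
case Fg: (inF g); last first.
  rewrite big1; last by move=> E _; rewrite /= !mul0r !mulr0.
  by rewrite /= !mulr0 !mul0r mulr0.
rewrite /= !mul1r.
under eq_bigr do rewrite !mul1r.
rewrite (E_iso2 p se Ff Fg).
apply: le_trans (joint_le e p0 p1 Ff Fg) _.
rewrite -[X in _ <= X]mulrA [X in _ <= _ * X]mulrC.
apply: ler_wpM2l; first by apply: mulr_ge0; apply: P0_ge0.
apply: ler_wpM2r => //.
exact: (pow_K bal p0 p1 f g).
Qed.


Lemma P0_gt0 : 0 < P0 e p.
Proof. by apply: prodr_gt0 => ij _; case: ifP => _; rewrite ?subr_gt0. Qed.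

Lemma tail_bound (beta : R) : 0 <= beta -> beta < 1 -> (0 < n %/ m)%N ->
  gnp_Pr p (fun E => Xr E <= beta * gnp_E p Xr) <=
  (((1 - p)^-1) ^+ (m * m) * (1 + (ttv p alpha - 1) / (n %/ m)%:R) ^+ m - 1) / (1 - beta) ^+ 2.
Proof.
move=> b0 b1 q0.
set Q : R := (n %/ m)%:R.
have Q0 : 0 < Q by rewrite ltr0n.
set c := ((1 - p)^-1) ^+ (m * m).
set t := ttv p alpha.
have mu0 : 0 < gnp_E p Xr by rewrite EX; apply: mulr_gt0; [apply: exprn_gt0|apply: P0_gt0].
have H := cheb b0 b1 (ltW mu0).
have H2 := EX2.
rewrite -/c -/t -/Q in H2.
have eq1 : Q * Q + Q * (t - 1) = Q ^+ 2 * (1 + (t - 1) / Q) by field; rewrite gt_eqF.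
have H3 : gnp_E p (fun E => Xr E ^+ 2) - gnp_E p Xr ^+ 2 <=
          gnp_E p Xr ^+ 2 * (c * (1 + (t - 1) / Q) ^+ m - 1).
  rewrite EX -/Q.
  apply: le_trans (lerB H2 (lexx _)) _.
  rewrite natrM -/Q eq1 exprMn -exprM mulnC exprM.
  rewrite le_eqVlt; apply/orP; left; apply/eqP; ring.
have b2 : 0 < (1 - beta) ^+ 2 by apply: exprn_gt0; rewrite subr_gt0.
rewrite ler_pdivlMr //.
have mu2 : 0 < gnp_E p Xr ^+ 2 by apply: exprn_gt0.
rewrite -(ler_pM2r mu2) mulrAC [X in _ <= X]mulrC.
rewrite -mulrA [X in _ * X <= _]mulrC; exact: le_trans H H3.
Qed.


Lemma P0_lb : p ^+ n_edges_in e [set: 'I_m] * (1 - p) ^+ (m * m) <= P0 e p.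
Proof.
have q0 : 0 < 1 - p by rewrite subr_gt0.
apply: le_trans (_ : p ^+ n_edges_in e [set: 'I_m] * (1 - p) ^+ #|Pairs m| <= _).
  apply: ler_wpM2l; first by rewrite exprn_ge0 ?ltW.
  apply: ler_wiXn2l; first by rewrite ltW // lerBlDr lerDl ltW.
  - by rewrite lerBlDr lerDl ltW.
  - by apply: leq_trans (max_card _) _; rewrite card_prod card_ord.
rewrite /P0.
apply: le_trans (_ : \prod_(ij in Pairs m) ((if e ij.1 ij.2 then p else 1) * (1 - p)) <= _); last first.
  apply: ler_prod => ij _; case: ifP => _; apply/andP; split.
  - by apply: mulr_ge0; rewrite ltW.
  - have q1 : 1 - p <= 1 by rewrite lerBlDr lerDl ltW.
    by rewrite ler_piMr // ltW.
  - by rewrite mul1r ltW.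
  - by rewrite mul1r.
rewrite big_split /= prodr_const -big_mkcondr /= prodr_const.
rewrite le_eqVlt; apply/orP; left; apply/eqP; congr (_ ^+ _ * _).
by apply: eq_card => ij; rewrite [in RHS]unfold_in /= !inE !enum_rank_ord.
Qed.

End Main.


Section Asym.
Variable R : realType.

Lemma big_n (a K : R) : 0 < a -> exists N : nat, forall n : nat, (N <= n)%N -> K <= n%:R `^ a.
Proof.
move=> a0.
set K' := Num.max K 1.
have K'1 : 1 <= K' by rewrite le_max lexx orbT.
set X := K' `^ (a^-1).
exists (Num.truncn X).+1 => n Hn.
have X0 : 0 <= X by apply: powR_ge0.
have Xn : X <= n%:R.
  apply: ltW; apply: lt_le_trans (truncnS_gt X) _; by rewrite ler_nat.
apply: le_trans (_ : X `^ a <= _).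
  have K'0 : 0 <= K' by apply: le_trans K'1.
  by rewrite /X -powRrM mulVf ?gt_eqF // powRr1 // le_max lexx.
apply: ge0_ler_powR => //; [exact: ltW | rewrite nnegrE; exact: le_trans X0 Xn].
Qed.

Lemma small_n (a eta : R) : 0 < a -> 0 < eta ->
  exists N : nat, forall n : nat, (N <= n)%N -> n%:R `^ (- a) <= eta.
Proof.
move=> a0 e0; have [N HN] := big_n (Num.max (eta^-1) 1) a0.
exists N.+1 => n Hn.
have n0 : 0 < n%:R :> R by rewrite ltr0n; apply: leq_trans Hn.
have := HN n (ltnW Hn); rewrite ge_max => /andP[h1 h2].
have pa : 0 < n%:R `^ a by apply: powR_gt0.
rewrite powRN invf_ple ?posrE ?invr_gt0 //.
Qed.

Lemma bernoulli (x : R) (k : nat) : 0 <= x -> x <= 1 -> 1 - k%:R * x <= (1 - x) ^+ k.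
Proof.
move=> x0 x1; elim: k => [|k IH]; first by rewrite mul0r subr0 expr0.
rewrite exprSr.
have h : 0 <= 1 - x by rewrite subr_ge0.
apply: le_trans (_ : (1 - k%:R * x) * (1 - x) <= _); last by apply: ler_wpM2r.
rewrite -natr1; have k0 : 0 <= k%:R :> R by apply: ler0n.
nra.
Qed.

Lemma expR_le_inv (y : R) : y < 1 -> expR y <= (1 - y)^-1.
Proof.
move=> y1.
have h := expR_ge1Dx (- y).
have p : 0 < 1 - y by rewrite subr_gt0.
rewrite expRN in h.
rewrite -[expR y]invrK lef_pV2 ?posrE ?invr_gt0 ?expR_gt0 //.
Qed.

End Asym.


Section Setup.
Variables (R : realType) (delta alpha rho : R) (n m : nat).
Hypothesis n1 : (1 <= n)%N.
Hypothesis hm : m%:R = n%:R `^ rho.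
Hypothesis mn : (m %| n)%N.
Hypothesis rho0 : 0 < rho.
Hypothesis alpha0 : 0 < alpha.

Let nn : R := n%:R.
Let pw (a : R) := nn `^ a.
Lemma nn0 : 0 < nn. Proof. by rewrite ltr0n. Qed.
Lemma pwD a b : pw a * pw b = pw (a + b).
Proof. by rewrite /pw powRD // (gt_eqF nn0) implybT. Qed.
Lemma pwN a : (pw a)^-1 = pw (- a).
Proof. by rewrite /pw powRN. Qed.
Lemma pw1 : pw 1 = nn.
Proof. by rewrite /pw powRr1 // ltW // nn0. Qed.
Lemma pw_gt0 a : 0 < pw a.
Proof. by apply: powR_gt0; apply: nn0. Qed.
Lemma pw_ge1 a : 0 <= a -> 1 <= pw a.
Proof.
move=> a0; rewrite -(powRr0 nn) /pw; apply: ler_powR => //.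
by rewrite ler1n.
Qed.

Lemma m_gt0 : (0 < m)%N.
Proof.
have : 1 <= m%:R :> R by rewrite hm; apply: pw_ge1; apply: ltW.
by rewrite ler1n.
Qed.

Lemma q_gt0 : (0 < n %/ m)%N.
Proof. by rewrite divn_gt0 ?m_gt0 // dvdn_leq. Qed.

Lemma Q_eq : (n %/ m)%:R = pw (1 - rho) :> R.
Proof.
rewrite natr_div // ?unitfE ?pnatr_eq0 -?lt0n ?m_gt0 //.
by rewrite -/nn hm -pw1 -/(pw rho) pwN pwD.
Qed.

Let p := pw (delta - 1).

Lemma pmm : (m * m)%:R * p = pw (- (1 - delta - 2 * rho)).
Proof.
rewrite natrM hm -/(pw rho) /p !pwD; congr pw; ring.
Qed.

Lemma tt_eq : ttv p alpha / (n %/ m)%:R * m%:R = pw (- (1 - 2 * rho - alpha * (1 - delta) / 2)).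
Proof.
rewrite /ttv Q_eq hm -/(pw rho) /p pwN /pw -powRrM -/(pw _) pwN !pwD; congr pw; ring.
Qed.

Lemma Qp_eq : (n %/ m)%:R * p `^ (alpha / 2) = pw (1 - rho - alpha * (1 - delta) / 2).
Proof.
rewrite Q_eq /p /pw -powRrM -/(pw _) pwD; congr pw; ring.
Qed.

End Setup.


Unset Implicit Arguments. Set Strict Implicit.

Theorem corollaryC1 (R : realType) (delta eps alpha rho : R) :
  0 < delta < 1 ->
  0 < eps < 1 / 7 ->
  2 < alpha -> alpha < Num.min (2 / (1 - delta)) 3 ->
  0 < rho -> rho < Num.min ((1 - delta) / 2) ((2 - alpha * (1 - delta)) / 4) ->
  (forall M : R, exists N : nat, forall n : nat, (N <= n)%N ->
     forall m : nat, m%:R = n%:R `^ rho -> (m %| n)%N ->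
     forall e : rel 'I_m, simple_graph e -> balanced e alpha ->
     M <= gnp_E (n%:R `^ (delta - 1)) (fun E => (@X_H n m e E)%:R))
  /\
  (exists N : nat, forall n : nat, (N <= n)%N ->
     forall m : nat, m%:R = n%:R `^ rho -> (m %| n)%N ->
     forall e : rel 'I_m, simple_graph e -> balanced e alpha ->
     forall beta : R, 0 <= beta < 1 ->
     let p := n%:R `^ (delta - 1) in
     gnp_Pr p (fun E => (@X_H n m e E)%:R <= beta * gnp_E p (fun E => (@X_H n m e E)%:R))
       <= 4 * eps / (1 - beta) ^+ 2).
Proof.
move=> /andP[d0 d1] /andP[e0 e7] a2 amin r0 rmin.
rewrite lt_min in amin; case/andP: amin => a_lt a3.
rewrite lt_min in rmin; case/andP: rmin => r1 r2.
have a1p : 0 < 1 - delta - 2 * rho by lra.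
have a2p : 0 < 1 - 2 * rho - alpha * (1 - delta) / 2 by lra.
have gp : 0 < 1 - rho - alpha * (1 - delta) / 2 by lra.
have alpha0 : 0 < alpha by lra.
have eps2 : 0 < eps / 2 by lra.
have basic : forall n m : nat, (1 <= n)%N -> m%:R = n%:R `^ rho -> (m %| n)%N ->
    n%:R `^ (- (1 - delta - 2 * rho)) <= eps / 2 ->
    [/\ 0 < n%:R `^ (delta - 1), n%:R `^ (delta - 1) <= eps / 2 & (0 < m)%N].
  move=> n m n1 hm mn H.
  have mp := m_gt0 n1 hm r0.
  have hp := pmm delta n1 hm; rewrite /= in hp.
  have p0 : 0 < n%:R `^ (delta - 1) :> R by apply: powR_gt0; rewrite ltr0n.
  split => //.
  apply: le_trans H; rewrite -hp ler_peMl ?(ltW p0) // natrM.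
  have : 1 <= m%:R :> R by rewrite ler1n.
  by move=> h; nra.
split.
- move=> M.
  have [N1 H1] := small_n a1p eps2.
  have [N2 H2] := big_n (2 * M) gp.
  exists (maxn 1 (maxn N1 N2)) => n Hn m hm mn e se bal.
  rewrite !geq_max in Hn; case/and3P: Hn => n1 hN1 hN2.
  have [p0 pe mp] := basic n m n1 hm mn (H1 n hN1).
  set p := n%:R `^ (delta - 1) in p0 pe *.
  have p1 : p < 1 by lra.
  have hne : (n_edges_in e [set: 'I_m])%:R = alpha / 2 * m%:R :> R.
    case: bal => hav _; move: hav; rewrite /has_avg_deg /avg_deg_in cardsT card_ord => hav.
    have m0 : (m%:R : R) != 0 by rewrite pnatr_eq0 -lt0n.
    by rewrite -hav natrM; field.
  rewrite (EX n p se).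
  apply: le_trans (_ : (n %/ m)%:R ^+ m * (p ^+ n_edges_in e [set: 'I_m] * (1 - p) ^+ (m * m)) <= _); last first.
    by apply: ler_wpM2l; [apply: exprn_ge0; apply: ler0n | apply: P0_lb].
  have hp : p ^+ n_edges_in e [set: 'I_m] = (p `^ (alpha / 2)) ^+ m.
    by rewrite -powR_mulrn ?(ltW p0) // hne powRrM powR_mulrn // powR_ge0.
  rewrite hp mulrA -exprMn (Qp_eq delta alpha n1 hm mn r0) /=.
  set G := n%:R `^ (1 - rho - alpha * (1 - delta) / 2).
  have G1 : 1 <= G.
    rewrite /G -[X in X <= _](powRr0 n%:R); apply: ler_powR; [by rewrite ler1n | exact: ltW].
  have GG : G <= G ^+ m by apply: ler_eXnr.
  have hb : 1 / 2 <= (1 - p) ^+ (m * m).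
    apply: le_trans (bernoulli (m * m) (ltW p0) (ltW p1)).
    have := pmm delta n1 hm; rewrite /= -/p => ->.
    have := H1 n hN1; lra.
  have := H2 n hN2; rewrite -/G => HG.
  have Y0 : 0 <= G ^+ m by apply: exprn_ge0; lra.
  nra.
- have [N1 H1] := small_n a1p eps2.
  have [N3 H3] := small_n a2p e0.
  exists (maxn 1 (maxn N1 N3)) => n Hn m hm mn e se bal beta /andP[b0 b1].
  cbv zeta; set p := n%:R `^ (delta - 1).
  rewrite !geq_max in Hn; case/and3P: Hn => n1 hN1 hN3.
  have [p0 pe mp] := basic n m n1 hm mn (H1 n hN1).
  rewrite -/p in p0 pe.
  have p1 : p < 1 by lra.
  have q0 := q_gt0 n1 hm mn r0.
  have TB := tail_bound se p0 p1 bal b0 b1 q0.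
  apply: le_trans TB _.
  apply: ler_wpM2r; first by rewrite invr_ge0 exprn_ge0 // subr_ge0 ltW.
  set c := ((1 - p)^-1) ^+ (m * m).
  set t := ttv p alpha.
  set Q : R := (n %/ m)%:R.
  have Q0 : 0 < Q by rewrite ltr0n.
  have pi1 : 1 <= p^-1 by rewrite invf_ge1 // ltW.
  have t1 : 1 <= t.
    rewrite /t /ttv -[X in X <= _](powRr0 p^-1); apply: ler_powR => //; lra.
  have hc : c <= expR (2 * p * (m * m)%:R).
    rewrite expRM_natr /c; apply: lerXn2r.
    - by rewrite nnegrE invr_ge0 subr_ge0 ltW.
    - by rewrite nnegrE expR_ge0.
    apply: le_trans (expR_ge1Dx _).
    have q1 : 0 < 1 - p by lra.
    rewrite -[(1 - p)^-1]mul1r ler_pdivrMr //; nra.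
  have hq : (1 + (t - 1) / Q) ^+ m <= expR (t / Q * m%:R).
    rewrite expRM_natr; apply: lerXn2r.
    - rewrite nnegrE; apply: addr_ge0 => //; apply: divr_ge0; lra.
    - by rewrite nnegrE expR_ge0.
    apply: le_trans (expR_ge1Dx _).
    rewrite lerD2l; apply: ler_wpM2r; [rewrite invr_ge0; lra | lra].
  have y1 : (m * m)%:R * p <= eps / 2.
    by have := pmm delta n1 hm; rewrite /= -/p => ->; apply: H1.
  have y2 : t / Q * m%:R <= eps.
    by have := tt_eq delta alpha n1 hm mn r0; rewrite /= -/p -/t -/Q => ->; apply: H3.
  set y := 2 * p * (m * m)%:R + t / Q * m%:R.
  have hy : y <= 2 * eps by rewrite /y; lra.
  have c0 : 0 <= c by rewrite /c exprn_ge0 // invr_ge0 subr_ge0 ltW.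
  have hcq : c * (1 + (t - 1) / Q) ^+ m <= expR y.
    rewrite /y expRD; apply: ler_pM => //.
    apply: exprn_ge0; apply: addr_ge0 => //; apply: divr_ge0; lra.
  have hy1 : y < 1 by lra.
  have := expR_le_inv hy1 => hE.
  have hf : (1 - y)^-1 <= 1 + 4 * eps.
    have q1 : 0 < 1 - y by lra.
    rewrite -[(1 - y)^-1]mul1r ler_pdivrMr //; nra.
  lra.
Qed.
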